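(* Let $f:\mathbb R^n\to\mathbb R$ be a convex polynomial of degree $d$ such that $f(\mathbf x)=s(\mathbf x)+p(\mathbf x)$ for all $\mathbf x\in\mathbb R^n$, where $s$ is a separable polynomial (i.e., $s(\mathbf x)=\sum_{j=1}^n s_j(x_j)$ for univariate polynomials $s_j$) and $p$ is a polynomial consisting only of non-separable monomials (monomials involving at least two distinct variables). Then $\deg(s)\ge\deg(p)$. *)

(* Defs.v *)
From HB Require Import structures.
From mathcomp Require Import all_boot all_order all_algebra.
From mathcomp Require Import reals.
From mathcomp Require Import mpoly.
Set Implicit Arguments. Unset Strict Implicit. Unset Printing Implicit Defensive.
Import Order.TTheory GRing.Theory Num.Theory.
Local Open Scope ring_scope.

Definition convex_mpoly (R : realType) (n : nat) (f : {mpoly R[n]}) : Prop :=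
  forall (x y : 'I_n -> R) (t : R), 0 <= t -> t <= 1 ->
    f.@[fun i => t * x i + (1 - t) * y i] <= t * f.@[x] + (1 - t) * f.@[y].

Definition separable_mpoly (R : realType) (n : nat) (s : {mpoly R[n]}) : Prop :=
  exists sj : 'I_n -> {poly R},
    s = \sum_(j < n) (map_poly (@mpolyC n R) (sj j)).['X_j].

Definition nonsep_monomial (n : nat) (m : 'X_{1..n}) : bool :=
  (1 < #|[pred i : 'I_n | m i != 0%N]|)%N.

Definition nonsep_mpoly (R : realType) (n : nat) (p : {mpoly R[n]}) : Prop :=
  forall m, m \in msupp p -> nonsep_monomial m.

(* Main.v *)
Require Import Defs.
From HB Require Import structures.
From mathcomp Require Import all_boot all_order all_algebra.
From mathcomp Require Import reals.
From mathcomp Require Import mpoly.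
From mathcomp Require Import polyrcf.
From mathcomp Require Import ring lra zify.
Import Order.TTheory GRing.Theory Num.Theory.
Local Open Scope ring_scope.
Section Aux.
Variable R : realType.

Lemma nonneg_coef (r : {poly R}) (D : nat) :
  (forall k, (D < k)%N -> r`_k = 0) -> (forall l, 0 <= r.[l]) -> 0 <= r`_D.
Proof.
move=> hk hr; rewrite leNgt; apply/negP => hD.
have hs : size r = D.+1.
  apply/eqP; rewrite eqn_leq; apply/andP; split.
    by apply/leq_sizeP => j hj; apply: hk.
  by rewrite ltnNge; apply/negP => /leq_sizeP /(_ D (leqnn _)) h; rewrite h ltxx in hD.
have hl : lead_coef (- r) = - r`_D by rewrite lead_coefN lead_coefE hs.
have : 0 < lead_coef (- r) by rewrite hl oppr_gt0.
move=> /poly_pinfty_gt_lc [N HN].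
have := HN N (lexx _); rewrite hl hornerN lerN2 => h.
have := hr N; lra.
Qed.

Lemma nonroot (V : {poly R}) : V != 0 -> exists mu, V.[mu] != 0.
Proof.
move=> hV; pose rs := [seq i%:R | i <- iota 0 (size V)] : seq R.
case hall: (all (root V) rs).
  exfalso; move/negP: hV; apply; apply/eqP; apply: (roots_geq_poly_eq0 hall).
    by rewrite map_inj_uniq ?iota_uniq // => i j /eqP; rewrite eqr_nat => /eqP.
  by rewrite size_map size_iota.
by move/negbT: hall => /allPn [x _ hx]; exists x.
Qed.
End Aux.
Section U.
Variable R : realType.
Variable n : nat.
Implicit Types (q : {mpoly R[n]}) (x : 'I_n -> R).

Definition U q x : {poly R} :=
  \sum_(m <- msupp q) (q@_m * \prod_i x i ^+ m i) *: 'X^(mdeg m).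

Lemma U_horner q x l : (U q x).[l] = q.@[fun i => l * x i].
Proof.
rewrite mevalE /U horner_sum; apply: eq_bigr => m _.
rewrite hornerZ hornerXn -mulrA; congr (_ * _).
rewrite [RHS](eq_bigr (fun i => l ^+ m i * x i ^+ m i)); last first.
  by move=> i _ /=; rewrite exprMn.
by rewrite big_split /= prodrXr mdegE mulrC.
Qed.

Lemma U_coef q x k :
  (U q x)`_k = \sum_(m <- msupp q | mdeg m == k) q@_m * \prod_i x i ^+ m i.
Proof.
rewrite /U coef_sum [RHS]big_mkcond /=; apply: eq_bigr => m _.
by rewrite coefZ coefXn eq_sym; case: eqP; rewrite ?mulr1 ?mulr0.
Qed.

Lemma U_coef0 q x k : (msize q <= k)%N -> (U q x)`_k = 0.
Proof.
move=> hk; rewrite U_coef big1_seq // => m /andP [/eqP hm hin].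
by have := msize_mdeg_lt hin; rewrite hm ltnNge hk.
Qed.

End U.
Section Digits.
Variable n : nat.

Lemma lo_bound (B : nat) (m : 'X_{1..n}) : (forall j, m j < B)%N ->
  forall i, (i <= n)%N -> (\sum_(j < n | (j < i)%N) m j * B ^ j < B ^ i)%N.
Proof.
move=> hB; elim=> [|i IH] hi.
  by rewrite big1 // => j; rewrite ltn0.
rewrite (bigD1 (Ordinal hi)) /= ?ltnSn //.
rewrite (eq_bigl (fun j : 'I_n => (j < i)%N)); last first.
  move=> j /=; rewrite ltnS leq_eqVlt -val_eqE /=.
  by case: (ltngtP j i) => //=; rewrite ?andbF.
have := IH (ltnW hi); have := hB (Ordinal hi).
set S := (\sum_(_ < _ | _) _)%N; set a := m _; move=> ha hS.
rewrite expnS; nia.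
Qed.

Lemma digit (B : nat) (m : 'X_{1..n}) (i : 'I_n) : (forall j, m j < B)%N ->
  (m i = ((\sum_(j < n) m j * B ^ j) %/ B ^ i) %% B)%N.
Proof.
move=> hB; have B0 : (0 < B)%N by have := hB i; lia.
rewrite (bigID (fun j : 'I_n => (j < i)%N)) /=.
rewrite [X in (_ + X)%N](bigD1 i) /= ?ltnn //.
set lo := (\sum_(j < n | (j < i)%N) _)%N.
set H := (\sum_(j < n | _ && _) _)%N.
have hdiv : (B ^ i.+1 %| H)%N.
  apply: dvdn_sum => j /andP [hj hne]; apply: dvdn_mull; rewrite dvdn_exp2l //.
  by move: hj hne; rewrite -val_eqE /=; lia.
have hlo : (lo < B ^ i)%N by apply: lo_bound => //; exact: ltnW (ltn_ord i).
rewrite -(divnK hdiv).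
have -> : (lo + (m i * B ^ i + H %/ B ^ i.+1 * B ^ i.+1) =
   (m i + H %/ B ^ i.+1 * B) * B ^ i + lo)%N by rewrite expnS; ring.
rewrite divnMDl ?expn_gt0 ?B0 // (divn_small hlo) addn0 addnC modnMDl modn_small //.
Qed.

Lemma digit_inj (B : nat) (m1 m2 : 'X_{1..n}) :
  (forall j, m1 j < B)%N -> (forall j, m2 j < B)%N ->
  (\sum_(j < n) m1 j * B ^ j = \sum_(j < n) m2 j * B ^ j)%N -> m1 = m2.
Proof.
move=> h1 h2 he; apply/mnmP => i.
by rewrite (@digit _ m1 i h1) (@digit _ m2 i h2) he.
Qed.
End Digits.
Section Jensen.
Variable R : realType.
Variable n : nat.

Lemma jensen (f : {mpoly R[n]}) : convex_mpoly f -> forall k (ys : 'I_k.+1 -> 'I_n -> R),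
  f.@[fun j => (k.+1%:R)^-1 * \sum_(i < k.+1) ys i j] <=
  (k.+1%:R)^-1 * \sum_(i < k.+1) f.@[ys i].
Proof.
move=> hc; elim=> [|k IH] ys.
  rewrite big_ord1 invr1 mul1r; rewrite le_eqVlt; apply/orP; left; apply/eqP/meval_eq => j.
  by rewrite big_ord1 mul1r.
set t : R := (k.+2%:R)^-1.
have hk1 : (k.+1%:R : R) != 0 by rewrite pnatr_eq0.
have hk2 : (k.+2%:R : R) != 0 by rewrite pnatr_eq0.
have ht0 : 0 <= t by rewrite invr_ge0 ler0n.
have ht1 : t <= 1 by rewrite invf_le1 ?ltr0n // ler1n.
pose ys' := fun i : 'I_k.+1 => ys (widen_ord (leqnSn _) i).
have eqpt : (fun j => (k.+2%:R)^-1 * \sum_(i < k.+2) ys i j) =1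
   (fun j => t * ys ord_max j + (1 - t) * ((k.+1%:R)^-1 * \sum_(i < k.+1) ys' i j)).
  move=> j; rewrite big_ord_recr /= /t /ys'.
  set S := \sum_(i < k.+1) _.
  have e2 : (k.+2%:R : R) = k.+1%:R + 1 by rewrite -natr1.
  rewrite e2 in hk2 *. field; have k0 : (0:R) <= k%:R := ler0n _ _; apply/andP; split; apply: lt0r_neq0; lra.
rewrite (meval_eq _ eqpt); apply: le_trans (hc _ _ t ht0 ht1) _.
have := IH ys'; set b := f.@[fun j : 'I_n => _ * _]; set S := \sum_(i < k.+1) _ => hb.
rewrite big_ord_recr /= -/t.
have e1 : (1 - t) * ((k.+1%:R)^-1 * S) = t * S.
  have e2 : (k.+2%:R : R) = k.+1%:R + 1 by rewrite -natr1.
  rewrite /t e2 in hk2 *. field; have k0 : (0:R) <= k%:R := ler0n _ _; apply/andP; split; apply: lt0r_neq0; lra.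
have : (1 - t) * b <= (1 - t) * ((k.+1%:R)^-1 * S) by apply: ler_wpM2l hb; rewrite subr_ge0.
rewrite e1 => h; have -> : \sum_(i < k.+1) f.@[ys (widen_ord (leqnSn k.+1) i)] = S by []. lra.
Qed.
End Jensen.
Section Axis.
Variable R : realType.
Variable n : nat.

Lemma p_axis (p : {mpoly R[n]}) (v : 'I_n -> R) (i : 'I_n) :
  nonsep_mpoly p -> (forall j, j != i -> v j = 0) -> p.@[v] = 0.
Proof.
move=> hp hv; rewrite mevalE big1_seq // => m /andP [_ hin].
have := hp m hin; rewrite /nonsep_monomial => /card_gt1P [a [b [ha hb hab]]].
have [c [hc hci]] : exists c, m c != 0%N /\ c != i.
  case: (eqVneq a i) => [ea|nea]; last by exists a.
  by exists b; split => //; rewrite -ea eq_sym.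
rewrite (bigD1 c) //= hv // expr0n (negbTE hc) mul0r; exact: mulr0.
Qed.

Lemma mnm_le_mdeg (m : 'X_{1..n}) j : (m j <= mdeg m)%N.
Proof. by rewrite mdegE (bigD1 j) //= leq_addr. Qed.
End Axis.
Arguments U {R n}.
Arguments U_horner {R n}.
Arguments U_coef {R n}.
Arguments U_coef0 {R n}.
Arguments jensen {R n}.
Arguments p_axis {R n}.
Arguments mnm_le_mdeg {n}.
Arguments digit_inj {n}.
Arguments nonneg_coef {R}.
Arguments nonroot {R}.
Theorem theorem3 (R : realType) (n : nat) (f s p : {mpoly R[n]}) :
  convex_mpoly f ->
  (forall x : 'I_n -> R, f.@[x] = s.@[x] + p.@[x]) ->
  separable_mpoly s ->
  nonsep_mpoly p ->
  (msize p <= msize s)%N.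
Proof.
case: n f s p => [|n] f s p hconv hf _ hp.
  rewrite msizeE big1_seq // => m /andP [_ hin].
  by have := hp m hin; case/card_gt1P => [[x hx]].
rewrite leqNgt; apply/negP => hlt.
set D := (msize p).-1.
have hpD : msize p = D.+1 by rewrite /D prednK //; lia.
have hsD : (msize s <= D)%N by lia.
have p0 : p != 0 by rewrite -msize_poly_eq0 hpD.
set m0 := mlead p.
have m0in : m0 \in msupp p := mlead_supp p0.
have m0D : mdeg m0 = D by apply/eq_add_S; rewrite mlead_deg.
have D1 : (1 <= D)%N.
  have := hp m0 m0in; case/card_gt1P => [a [b [ha hb _]]].
  rewrite lt0n -m0D mdeg_eq0; apply/negP => /eqP e.
  by move: ha; rewrite inE e mnm0E.
pose N : R := n.+1%:R.
have N0 : N != 0 by rewrite pnatr_eq0.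
pose y (x : 'I_n.+1 -> R) (i : 'I_n.+1) := fun j => if j == i then N * x j else 0.
pose Ubd x : {poly R} := N^-1 *: \sum_i U s (y x i).
have Ubd_coef x k : (D <= k)%N -> (Ubd x)`_k = 0.
  move=> hk; rewrite coefZ coef_sum big1 ?mulr0 // => i _.
  by apply: U_coef0; lia.
have upper x l : f.@[fun j => l * x j] <= (Ubd x).[l].
  have J := jensen f hconv n (fun i j => l * y x i j).
  have e1 : (fun j => l * x j) =1
      (fun j => n.+1%:R^-1 * \sum_(i < n.+1) (fun i j => l * y x i j) i j).
    move=> j /=; rewrite (bigD1 j) //= /y eqxx big1 => [|i hi]; last first.
      by rewrite eq_sym (negbTE hi) mulr0.
    by rewrite addr0 -/N mulrCA mulKf.
  rewrite (meval_eq _ e1); apply: le_trans J _.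
  rewrite hornerZ horner_sum le_eqVlt; apply/orP; left; apply/eqP; congr (_ * _).
  apply: eq_bigr => i _; rewrite U_horner hf (p_axis p _ i hp) ?addr0 //.
  by move=> j hj; rewrite /y (negbTE hj) mulr0.
have lower x l : 2 * f.@[fun _ => 0] - (Ubd (fun j => - x j)).[l] <= f.@[fun j => l * x j].
  have h2 : (0:R) <= 2^-1 by rewrite invr_ge0 ler0n.
  have h2' : (2^-1 : R) <= 1 by rewrite invf_le1 ?ltr0n // ler1n.
  have hc := hconv (fun j => l * x j) (fun j => l * - x j) (2^-1) h2 h2'.
  have ept : (fun i => 2^-1 * (l * x i) + (1 - 2^-1) * (l * - x i)) =1 (fun _ => 0 : R).
    by move=> i /=; field.
  rewrite (meval_eq _ ept) in hc.
  have hu := upper (fun j => - x j) l.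
  lra.
have feq x l : f.@[fun j => l * x j] = (U s x).[l] + (U p x).[l].
  by rewrite hf !U_horner.
have Pz x : (U p x)`_D = 0.
  have hA := nonneg_coef (Ubd x - (U s x + U p x)) D.
  have hB := nonneg_coef (U s x + U p x - (2 * f.@[fun _ => 0])%:P + Ubd (fun j => - x j)) D.
  rewrite coefB coefD Ubd_coef // U_coef0 // in hA.
  rewrite coefD coefB coefD coefC Ubd_coef // U_coef0 // in hB.
  have : D == 0%N = false by apply/negbTE; rewrite -lt0n.
  move=> hD0; rewrite hD0 in hB.
  have hA' : 0 <= 0 - (0 + (U p x)`_D).
    apply: hA.
      move=> k hk; have hks : (msize s <= k)%N by lia.
      have hkp : (msize p <= k)%N by lia.
      by rewrite coefB coefD Ubd_coef ?(ltnW hk) // !U_coef0 // addr0 subrr.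
    by move=> l; rewrite hornerD hornerN hornerD subr_ge0 -feq upper.
  have hB' : 0 <= 0 + (U p x)`_D - 0 + 0.
    apply: hB.
      move=> k hk; have hk0 : (k == 0%N) = false by apply/negbTE; rewrite -lt0n; lia.
      have hks : (msize s <= k)%N by lia.
      have hkp : (msize p <= k)%N by lia.
      by rewrite coefD coefB coefD coefC hk0 Ubd_coef ?(ltnW hk) // !U_coef0 // add0r subr0 addr0.
    move=> l; rewrite hornerD hornerD hornerN hornerD hornerC -feq.
    have := lower x l; lra.
  lra.
pose Bk := msize p.
pose e (m : 'X_{1..n.+1}) := (\sum_(j < n.+1) m j * Bk ^ j)%N.
pose V : {poly R} := \sum_(m <- msupp p | mdeg m == D) p@_m *: 'X^(e m).
have hV mu : V.[mu] = (U p (fun i => mu ^+ (Bk ^ i)))`_D.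
  rewrite U_coef horner_sum; apply: eq_bigr => m _; rewrite hornerZ hornerXn; congr (_ * _).
  rewrite /e -prodrXr; apply: eq_bigr => j _; by rewrite -exprM mulnC.
have bnd m : m \in msupp p -> forall j, (m j < Bk)%N.
  by move=> hin j; exact: leq_ltn_trans (mnm_le_mdeg m j) (msize_mdeg_lt hin).
have hVc : V`_(e m0) = p@_m0.
  rewrite coef_sum big_mkcond (bigD1_seq m0) ?msupp_uniq //= m0D eqxx coefZ coefXn eqxx mulr1.
  rewrite big1_seq ?addr0 // => m /andP [hne hin].
  case: ifP => // _; rewrite coefZ coefXn; case: eqP => [he|]; last by rewrite mulr0.
  by move/negP: hne; case; apply/eqP; apply: (digit_inj Bk) (bnd _ hin) (bnd _ m0in) (esym he).
have V0 : V != 0.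
  apply/eqP => h; move: hVc; rewrite h coef0 => /esym/eqP; rewrite mcoeff_eq0 m0in //.
have [mu hmu] := nonroot V V0.
by rewrite hV Pz eqxx in hmu.
Qed.
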